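(* In the setting of the context, the fixed point algebra $M^A=\{m\in M: a\triangleright m=\varepsilon_A(a)m \text{ for all } a\in A\}$ equals $N$.
   Context: $k$ is a field; $C_R(S)=\{r\in R:rs=sr\ \forall s\in S\}$. $N\subseteq M$ is a strongly separable, irreducible extension of $k$-algebras: $C_M(N)=k1$ and there are an $N$-bimodule map $E:M\to N$ and $x_1,\dots,x_n,y_1,\dots,y_n\in M$ with $\sum_iE(mx_i)y_i=m=\sum_ix_iE(y_im)$ for all $m\in M$, $E(1)\neq0$, $\sum_ix_iy_i\neq0$; normalized so that $E(1)=1$, whence $\sum_ix_iy_i=\lambda^{-1}1$ with $0\neq\lambda\in k$. Basic construction: given $S\subseteq R$, an $S$-bimodule map $E_S:R\to S$ with $E_S(1)=1$ and $r_i,s_i\in R$ with $\sum_iE_S(rr_i)s_i=r=\sum_ir_iE_S(s_ir)$ and $\sum_ir_is_i=\lambda^{-1}1$, set $R_1=R\otimes_SR$ with product $(a\otimes b)(c\otimes d)=aE_S(bc)\otimes d$, unit $\sum_ir_i\otimes s_i$, $R\subseteq R_1$ via $r\mapsto\sum_irr_i\otimes s_i$, Jones idempotent $e=1\otimes1$, $E_R:R_1\to R$, $a\otimes b\mapsto\lambda ab$; then $E_R$, $\lambda^{-1}r_i\otimes1$, $1\otimes s_i$ satisfy the same conditions with the same $\lambda$. From $(N\subseteq M,E)$ get $M_1,e_1,E_M$; from $(M\subseteq M_1,E_M)$ get $M_2,e_2,E_{M_1}$. Let $A=C_{M_1}(N)$, $B=C_{M_2}(M)$, $C=C_{M_2}(N)$.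 Depth 2 is assumed: $M_1$ is free as right $M$-module with basis in $A$, $M_2$ free as right $M_1$-module with basis in $B$. Let $F=E_M\circ E_{M_1}$, with values on $C$ in $k1\cong k$. The form $\langle a,b\rangle=\lambda^{-2}F(ae_2e_1b)$ is a non-degenerate pairing $A\times B\to k$; $B$ is a Hopf algebra with $\Delta(b)=b_{(1)}\otimes b_{(2)}$ given by $\langle a,b_{(1)}\rangle\langle a',b_{(2)}\rangle=\langle aa',b\rangle$, $\varepsilon(b)=\langle1,b\rangle$, antipode determined by $E_{M_1}(be_1e_2)=E_{M_1}(e_2e_1S(b))$; $A$ is the dual Hopf algebra: $\Delta_A(a)=a_{(1)}\otimes a_{(2)}$ with $\langle a_{(1)},b\rangle\langle a_{(2)},b'\rangle=\langle a,bb'\rangle$, $\varepsilon_A(a)=\langle a,1\rangle$, $\langle S_A(a),b\rangle=\langle a,S(b)\rangle$. $M$ is a left $A$-module algebra via $a\triangleright m=a_{(1)}mS_A(a_{(2)})$ (product computed in $M_1$; the result lies in $M$). *)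

(* Defs.v *)
From mathcomp Require Import all_boot all_algebra.
Set Implicit Arguments. Unset Strict Implicit. Unset Printing Implicit Defensive.
Import GRing.Theory.
Local Open Scope ring_scope.

(* M_1 = M ⊗_N M is realised faithfully inside the functions M -> M via
     a ⊗ b  |->  (z |-> a * E (b * z)),
   products being composition and M ⊆ M_1 via left multiplication.
   M_2 = M_1 ⊗_M M_1 is realised inside the functions (M -> M) -> (M -> M) via
     P ⊗ Q  |->  (X |-> P ∘ L_{E_M (Q ∘ X)}),
   products being composition and M_1 ⊆ M_2 via left composition. *)

Section Tower.
Variables (k : fieldType) (M : algType k) (N : {pred M}) (E : M -> M)
  (n : nat) (x y : 'I_n -> M) (lam : k).

Definition M1T := M -> M.
Definition M2T := M1T -> M1T.

Definition lmul (m : M) : M1T := fun z => m * z.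

Definition inM1 (f : M1T) : Prop :=
  exists q (a b : 'I_q -> M), f = fun z => \sum_(i < q) a i * E (b i * z).

(* Jones idempotent e_1 = 1 ⊗ 1 *)
Definition e1 : M1T := E.

(* E_M : M_1 -> M, a ⊗ b |-> lam a b *)
Definition EM (f : M1T) : M := lam *: \sum_(i < n) f (x i) * y i.

Definition iM12 (f : M1T) : M2T := fun X => f \o X.

Definition inM2 (Phi : M2T) : Prop :=
  exists q (P Q : 'I_q -> M1T), (forall i, inM1 (P i) /\ inM1 (Q i)) /\
    Phi = fun X z => \sum_(i < q) P i (EM (Q i \o X) * z).

(* Jones idempotent e_2 = 1 ⊗ 1 in M_2 *)
Definition e2 : M2T := fun X => lmul (EM X).

(* quasi-basis of M ⊆ M_1 : lam^-1 x_i ⊗ 1 and 1 ⊗ y_i *)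
Definition qbu (i : 'I_n) : M1T := fun z => lam^-1 *: (x i * E z).
Definition qbv (i : 'I_n) : M1T := fun z => E (y i * z).

(* E_{M_1} : M_2 -> M_1, P ⊗ Q |-> lam P Q *)
Definition EM1 (Phi : M2T) : M1T :=
  fun z => lam *: \sum_(i < n) Phi (qbu i) (qbv i z).

Definition Fmap (Phi : M2T) : M := EM (EM1 Phi).

Definition inA (f : M1T) : Prop :=
  inM1 f /\ forall u, u \in N -> f \o lmul u = lmul u \o f.
Definition inB (Phi : M2T) : Prop :=
  inM2 Phi /\ forall m : M, Phi \o iM12 (lmul m) = iM12 (lmul m) \o Phi.

(* pairing <a, b> = lam^-2 F (a e_2 e_1 b), with values in k1 ⊆ M *)
Definition pairing (a : M1T) (b : M2T) : M :=
  lam ^- 2 *: Fmap (iM12 a \o e2 \o iM12 e1 \o b).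

Definition epsA (a : M1T) : M := pairing a id.

(* t = S(b) for the antipode of B *)
Definition antipodeB (b t : M2T) : Prop :=
  inB t /\ EM1 (b \o iM12 e1 \o e2) = EM1 (e2 \o iM12 e1 \o t).

(* s = S_A(a) : <S_A(a), b> = <a, S(b)> *)
Definition antipodeA (a s : M1T) : Prop :=
  inA s /\ forall b t, inB b -> antipodeB b t -> pairing s b = pairing a t.

(* Delta_A(a) = \sum_i a1 i ⊗ a2 i *)
Definition coprodA (a : M1T) q (a1 a2 : 'I_q -> M1T) : Prop :=
  (forall i, inA (a1 i) /\ inA (a2 i)) /\
  forall b b', inB b -> inB b' ->
    \sum_(i < q) pairing (a1 i) b * pairing (a2 i) b' = pairing a (b \o b').

(* m ∈ M^A : a ▷ m = a_(1) m S_A(a_(2)) equals eps_A(a) m for all a ∈ A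
   (equality in M_1, where M sits via left multiplication) *)
Definition fixedA (m : M) : Prop :=
  forall a, inA a ->
  forall q (a1 a2 : 'I_q -> M1T), coprodA a a1 a2 ->
  forall s : 'I_q -> M1T, (forall i, antipodeA (a2 i) (s i)) ->
    (fun z => \sum_(i < q) a1 i (m * s i z)) = lmul (epsA a * m).

Definition depth2 : Prop :=
  (exists p (g : 'I_p -> M1T), (forall i, inA (g i)) /\
     (forall X, inM1 X -> exists c : 'I_p -> M,
          X = fun z => \sum_(i < p) g i (c i * z)) /\
     (forall c c' : 'I_p -> M,
          (fun z => \sum_(i < p) g i (c i * z)) =
          (fun z => \sum_(i < p) g i (c' i * z)) -> forall i, c i = c' i)) /\
  (exists p (h : 'I_p -> M2T), (forall i, inB (h i)) /\
     (forall Phi, inM2 Phi -> exists c : 'I_p -> M1T, (forall i, inM1 (c i)) /\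
          Phi = fun X z => \sum_(i < p) h i (c i \o X) z) /\
     (forall c c' : 'I_p -> M1T, (forall i, inM1 (c i) /\ inM1 (c' i)) ->
          (fun X z => \sum_(i < p) h i (c i \o X) z) =
          (fun X z => \sum_(i < p) h i (c' i \o X) z) -> forall i, c i = c' i)).

End Tower.

(* Main.v *)
Require Import Defs.
From mathcomp Require Import all_boot all_algebra.
From Stdlib Require Import FunctionalExtensionality ClassicalEpsilon.
Set Implicit Arguments. Unset Strict Implicit. Unset Printing Implicit Defensive.
Import GRing.Theory.
Local Open Scope ring_scope.

Section Main.
Variables (k : fieldType) (M : algType k) (N : {pred M}) (E : M -> M) (n : nat) (x y : 'I_n -> M) (lam : k).
Hypothesis HN : subalg_closed N.
Hypothesis HEN : forall m, E m \in N.
Hypothesis HEadd : forall m m', E (m + m') = E m + E m'.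
Hypothesis HEl : forall u m, u \in N -> E (u * m) = u * E m.
Hypothesis HEr : forall u m, u \in N -> E (m * u) = E m * u.
Hypothesis Hqb1 : forall m, \sum_(i < n) E (m * x i) * y i = m.
Hypothesis Hqb2 : forall m, \sum_(i < n) x i * E (y i * m) = m.
Hypothesis HE1 : E 1 = 1.
Hypothesis Hlam : lam != 0.
Hypothesis Hxy : \sum_(i < n) x i * y i = lam^-1%:A.
Hypothesis Hirr : forall m : M, (forall u, u \in N -> m * u = u * m) -> exists c : k, m = c%:A.

#[local] Hint Resolve HEN : core.
Local Notation EMs := (EM x y lam).
Local Notation qbus := (qbu E x lam).
Local Notation qbvs := (qbv E y).
Local Notation inBs := (inB E x y lam).
Local Notation inM2s := (inM2 E x y lam).
Local Notation EM1s := (EM1 E x y lam).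
Local Notation pairs := (pairing E x y lam).
Local Notation e2s := (e2 x y lam).
Local Notation inAs := (inA N E).


Lemma N0 : 0 \in N.
Proof. case: HN => H1 Hl _. have := Hl (-1) 1 1 H1 H1. by rewrite scaleN1r addNr. Qed.
Lemma Nscal (c : k) : c%:A \in N.
Proof. case: HN => H1 Hl _. have := Hl c 1 0 H1 N0. by rewrite addr0. Qed.

Lemma add_sum (f : M -> M) : (forall a b, f (a + b) = f a + f b) ->
  forall I (r : seq I) (P : pred I) F, f (\sum_(i <- r | P i) F i) = \sum_(i <- r | P i) f (F i).
Proof.
move=> Hf I r P F. have f0 : f 0 = 0.
  have h := Hf 0 0; rewrite addr0 in h.
  by apply: (addrI (f 0)); rewrite addr0 -h.
exact: (big_morph f Hf f0).
Qed.

Lemma E0 : E 0 = 0.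
Proof. have h := HEadd 0 0; rewrite addr0 in h. by apply: (addrI (E 0)); rewrite addr0 -h. Qed.
Lemma Esum I (r : seq I) (P : pred I) F : E (\sum_(i <- r | P i) F i) = \sum_(i <- r | P i) E (F i).
Proof. exact: add_sum. Qed.
Lemma EZ (c : k) m : E (c *: m) = c *: E m.
Proof. by rewrite -mulr_algl HEl ?Nscal // mulr_algl. Qed.

Definition central (m : M) := forall u, u \in N -> m * u = u * m.
Definition rlin (f : M -> M) := (forall a b, f (a + b) = f a + f b) /\ (forall u z, u \in N -> f (z * u) = f z * u).
Definition llin (f : M -> M) := forall u z, u \in N -> f (u * z) = u * f z.
Definition blin f := rlin f /\ llin f.

Lemma centralC m z : central m -> m * z = z * m.
Proof. by move=> /Hirr [c ->]; rewrite mulr_algl mulr_algr. Qed.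
Lemma rlinC f m z : rlin f -> central m -> f (z * m) = f z * m.
Proof. by move=> [_ Hf] /Hirr [c ->]; rewrite Hf ?Nscal. Qed.
Lemma llinC f m z : llin f -> central m -> f (m * z) = m * f z.
Proof. by move=> Hf /Hirr [c ->]; rewrite Hf ?Nscal. Qed.
Lemma rlinZ f (c : k) z : rlin f -> f (c *: z) = c *: f z.
Proof.
move=> Hf; have Hc : central c%:A by move=> u _; rewrite mulr_algl mulr_algr.
by rewrite -mulr_algr (rlinC _ Hf Hc) mulr_algr.
Qed.
Lemma rlin_sum f I (r : seq I) (P : pred I) F : rlin f -> f (\sum_(i <- r | P i) F i) = \sum_(i <- r | P i) f (F i).
Proof. by move=> [Ha _]; apply: add_sum. Qed.
Lemma rlin0 f : rlin f -> f 0 = 0.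
Proof. case=> Hf _; have h := Hf 0 0; rewrite addr0 in h. by apply: (addrI (f 0)); rewrite addr0 -h. Qed.

Lemma expand f z : rlin f -> f z = \sum_(i < n) f (x i) * E (y i * z).
Proof.
move=> Hf; rewrite -{1}(Hqb2 z) (rlin_sum _ _ _ Hf); apply: eq_bigr => i _.
by case: Hf => _ ->.
Qed.

Lemma inM1_rlin f : inM1 E f -> rlin f.
Proof.
case=> q [a [b ->]]; split.
  by move=> u v; rewrite -big_split; apply: eq_bigr => i _; rewrite mulrDr HEadd mulrDr.
by move=> u z Hu; rewrite mulr_suml; apply: eq_bigr => i _; rewrite mulrA HEr // mulrA.
Qed.
Lemma rlin_inM1 f : rlin f -> inM1 E f.
Proof.
move=> Hf; exists n, (fun i => f (x i)), y.
by apply: functional_extensionality => z; apply: expand.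
Qed.
Lemma inA_blin f : inA N E f -> blin f.
Proof.
case=> /inM1_rlin Hf Hc; split => // u z Hu.
by have := Hc u Hu => /(congr1 (fun g => g z)).
Qed.
Lemma blin_inA f : blin f -> inA N E f.
Proof.
case=> Hf Hl; split; first exact: rlin_inM1.
by move=> u Hu; apply: functional_extensionality => z /=; rewrite /lmul Hl.
Qed.

Lemma Erlin : rlin E.
Proof. by split=> // u z Hu; rewrite HEr. Qed.
Lemma Ellin : llin E.
Proof. by move=> u z Hu; rewrite HEl. Qed.

Lemma casimir (Phi : M -> M -> M) w :
  (forall a b t, Phi (a + b) t = Phi a t + Phi b t) ->
  (forall s a b, Phi s (a + b) = Phi s a + Phi s b) ->
  (forall s u t, u \in N -> Phi (s * u) t = Phi s (u * t)) ->
  \sum_(k < n) Phi (w * x k) (y k) = \sum_(k < n) Phi (x k) (y k * w).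
Proof.
move=> H1 H2 H3.
have S1 : forall I (r : seq I) (P : pred I) F t, Phi (\sum_(i <- r | P i) F i) t = \sum_(i <- r | P i) Phi (F i) t.
  by move=> I r P F t; exact: (@add_sum (fun s => Phi s t) (fun a b => H1 a b t)).
have S2 : forall I (r : seq I) (P : pred I) F s, Phi s (\sum_(i <- r | P i) F i) = \sum_(i <- r | P i) Phi s (F i).
  by move=> I r P F s; exact: (@add_sum (Phi s) (H2 s)).
transitivity (\sum_(kk < n) \sum_(l < n) Phi (x l * E (y l * (w * x kk))) (y kk)).
  by apply: eq_bigr => kk _; rewrite -S1 Hqb2.
rewrite exchange_big /=; apply: eq_bigr => l _.
rewrite -(Hqb1 (y l * w)) S2; apply: eq_bigr => kk _.
by rewrite H3 // mulrA.
Qed.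


Definition T (g : M -> M) := \sum_(i < n) g (x i) * y i.
Definition T' (g : M -> M) := \sum_(i < n) x i * g (y i).
Definition R (g d : M -> M) := \sum_(j < n) g (x j) * d (y j).
Definition hat (d : M -> M) := fun v => \sum_(i < n) x i * E (d (y i) * v).
Definition tl (d : M -> M) := fun v => \sum_(j < n) E (v * d (x j)) * y j.
Arguments tl d v : simpl never.
Arguments hat d v : simpl never.

Lemma blin_add f a b : blin f -> f (a + b) = f a + f b.
Proof. by case=> [[]]. Qed.
Lemma blin_r f z u : blin f -> u \in N -> f (z * u) = f z * u.
Proof. by case=> [[_ H]] _; apply: H. Qed.
Lemma blin_l f z u : blin f -> u \in N -> f (u * z) = u * f z.
Proof. by case=> _ H; apply: H. Qed.
Lemma blin_sum f I (r : seq I) (P : pred I) F : blin f -> f (\sum_(i <- r | P i) F i) = \sum_(i <- r | P i) f (F i).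
Proof. by case=> Hf _; apply: rlin_sum. Qed.
Lemma blinZ f (c : k) z : blin f -> f (c *: z) = c *: f z.
Proof. by case=> Hf _; apply: rlinZ. Qed.
Lemma blinC_r f m z : blin f -> central m -> f (z * m) = f z * m.
Proof. by case=> Hf _; apply: rlinC. Qed.
Lemma blinC_l f m z : blin f -> central m -> f (m * z) = m * f z.
Proof. by case=> _ Hf; apply: llinC. Qed.
Lemma blin0 f : blin f -> f 0 = 0.
Proof. by case=> Hf _; apply: rlin0. Qed.

Lemma Eblin : blin E.
Proof. by split; [exact: Erlin | exact: Ellin]. Qed.

Lemma E_nondeg_r P Q : (forall q, E (P * q) = E (Q * q)) -> P = Q.
Proof. by move=> H; rewrite -(Hqb1 P) -(Hqb1 Q); apply: eq_bigr => i _; rewrite H. Qed.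
Lemma E_nondeg_l P Q : (forall p, E (p * P) = E (p * Q)) -> P = Q.
Proof. by move=> H; rewrite -(Hqb2 P) -(Hqb2 Q); apply: eq_bigr => i _; rewrite H. Qed.

Lemma T_central g : blin g -> central (T g).
Proof.
move=> Hg u Hu; rewrite /T mulr_suml mulr_sumr.
transitivity (\sum_(i < n) g (u * x i) * y i); last first.
  by apply: eq_bigr => i _; rewrite (blin_l _ Hg Hu) mulrA.
symmetry; rewrite (@casimir (fun s t => g s * t)).
- by apply: eq_bigr => i _; rewrite mulrA.
- by move=> a b t; rewrite (blin_add _ _ Hg) mulrDl.
- by move=> s a b; rewrite mulrDr.
- by move=> s v t Hv; rewrite (blin_r _ Hg Hv) mulrA.
Qed.

Lemma T'_central g : blin g -> central (T' g).
Proof.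
move=> Hg u Hu; rewrite /T' mulr_suml mulr_sumr.
transitivity (\sum_(i < n) x i * g (y i * u)).
  by apply: eq_bigr => i _; rewrite (blin_r _ Hg Hu) mulrA.
rewrite -(@casimir (fun s t => s * g t)).
- by apply: eq_bigr => i _; rewrite mulrA.
- by move=> a b t; rewrite mulrDl.
- by move=> s a b; rewrite (blin_add _ _ Hg) mulrDr.
- by move=> s v t Hv; rewrite (blin_l _ Hg Hv) mulrA.
Qed.

Lemma R_central g d : blin g -> blin d -> central (R g d).
Proof.
move=> Hg Hd u Hu; rewrite /R mulr_suml mulr_sumr.
transitivity (\sum_(i < n) g (x i) * d (y i * u)).
  by apply: eq_bigr => i _; rewrite (blin_r _ Hd Hu) mulrA.
transitivity (\sum_(i < n) g (u * x i) * d (y i)); last first.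
  by apply: eq_bigr => i _; rewrite (blin_l _ Hg Hu) mulrA.
rewrite -(@casimir (fun s t => g s * d t)) //.
- by move=> a b t; rewrite (blin_add _ _ Hg) mulrDl.
- by move=> s a b; rewrite (blin_add _ _ Hd) mulrDr.
- by move=> s v t Hv; rewrite (blin_r _ Hg Hv) (blin_l _ Hd Hv) mulrA.
Qed.

Lemma hat_blin d : blin d -> blin (hat d).
Proof.
move=> Hd; split; first split.
- by move=> a b; rewrite /hat -big_split; apply: eq_bigr => i _; rewrite mulrDr HEadd mulrDr.
- by move=> u z Hu; rewrite /hat mulr_suml; apply: eq_bigr => i _; rewrite mulrA HEr // mulrA.
move=> u z Hu; rewrite /hat mulr_sumr.
transitivity (\sum_(i < n) x i * E (d (y i * u) * z)).
  by apply: eq_bigr => i _; rewrite (blin_r _ Hd Hu) mulrA.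
rewrite -(@casimir (fun s t => s * E (d t * z))).
- by apply: eq_bigr => i _; rewrite mulrA.
- by move=> a b t; rewrite mulrDl.
- by move=> s a b; rewrite (blin_add _ _ Hd) mulrDl HEadd mulrDr.
- by move=> s v t Hv; rewrite (blin_l _ Hd Hv) -[v * d t * z]mulrA [E (v * _)]HEl // mulrA.
Qed.

Lemma tl_blin d : blin d -> blin (tl d).
Proof.
move=> Hd; split; first split.
- by move=> a b; rewrite /tl -big_split; apply: eq_bigr => i _; rewrite mulrDl HEadd mulrDl.
- move=> u z Hu; rewrite /tl mulr_suml.
  transitivity (\sum_(i < n) E (z * d (u * x i)) * y i).
    by apply: eq_bigr => i _; rewrite (blin_l _ Hd Hu) mulrA.
  rewrite (@casimir (fun s t => E (z * d s) * t)).
  + by apply: eq_bigr => i _; rewrite mulrA.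
  + by move=> a b t; rewrite (blin_add _ _ Hd) mulrDr HEadd mulrDl.
  + by move=> s a b; rewrite mulrDr.
  + by move=> s v t Hv; rewrite (blin_r _ Hd Hv) mulrA HEr // mulrA.
move=> u z Hu; rewrite /tl mulr_sumr; apply: eq_bigr => i _.
by rewrite -mulrA HEl // mulrA.
Qed.

Lemma hatE d p q : blin d -> E (p * hat d q) = E (d p * q).
Proof.
move=> Hd; rewrite /hat mulr_sumr Esum.
transitivity (E (\sum_(i < n) E (p * x i) * d (y i) * q)).
  rewrite Esum; apply: eq_bigr => i _.
  by rewrite mulrA HEr // -mulrA [E (E _ * _)]HEl.
by rewrite -mulr_suml; congr (E (_ * q)); rewrite -[in RHS](Hqb1 p) (blin_sum _ _ _ Hd); apply: eq_bigr => i _; rewrite (blin_l _ Hd).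
Qed.

Lemma tlE d p q : blin d -> E (tl d p * q) = E (p * d q).
Proof.
move=> Hd; rewrite /tl mulr_suml Esum.
rewrite [in RHS](expand q (proj1 Hd)) mulr_sumr Esum; apply: eq_bigr => i _.
by rewrite -mulrA [E (E _ * _)]HEl // mulrA [E (_ * E _)]HEr.
Qed.

Lemma tl_hat d z : blin d -> tl (hat d) z = d z.
Proof.
move=> Hd; apply: E_nondeg_r => q.
by rewrite tlE ?hatE //; exact: hat_blin.
Qed.
Lemma hat_tl d z : blin d -> hat (tl d) z = d z.
Proof.
move=> Hd; apply: E_nondeg_l => p.
by rewrite hatE ?tlE //; exact: tl_blin.
Qed.

Lemma mul1x i : 1 * x i = x i. Proof. by rewrite mul1r. Qed.
Lemma sumEx_y : \sum_(i < n) E (x i) * y i = 1.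
Proof. by rewrite -[RHS](Hqb1 1); apply: eq_bigr => i _; rewrite mul1r. Qed.
Lemma sumx_Ey : \sum_(i < n) x i * E (y i) = 1.
Proof. by rewrite -[RHS](Hqb2 1); apply: eq_bigr => i _; rewrite mulr1. Qed.

Lemma EM_T f : EMs f = lam *: T f.
Proof. by []. Qed.

Lemma T_lmul f m : rlin f -> T (f \o lmul m) = T f * m.
Proof.
move=> Hf; rewrite /T /=.
transitivity (\sum_(j < n) \sum_(l < n) f (x l) * E (y l * (m * x j)) * y j).
  by apply: eq_bigr => j _; rewrite /lmul (expand _ Hf) mulr_suml.
rewrite exchange_big /= mulr_suml; apply: eq_bigr => l _.
by rewrite -mulrA -(Hqb1 (y l * m)) mulr_sumr; apply: eq_bigr => j _; rewrite !mulrA.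
Qed.

Lemma T_lmulE w : T (lmul w \o E) = w.
Proof.
rewrite /T /lmul /= -{2}(mulr1 w) -sumEx_y mulr_sumr; apply: eq_bigr => i _; by rewrite mulrA.
Qed.

Lemma T_id : T id = lam^-1%:A.
Proof. exact: Hxy. Qed.

Lemma T_E g : rlin g -> T (g \o E) = g 1.
Proof.
move=> Hg; rewrite /T /=.
transitivity (g 1 * \sum_(i < n) E (x i) * y i); last by rewrite sumEx_y mulr1.
rewrite mulr_sumr; apply: eq_bigr => i _.
by rewrite -(mul1r (E (x i))) (proj2 Hg) // mul1r mulrA.
Qed.

Lemma tl_E v : tl E v = E v.
Proof.
rewrite /tl; transitivity (E v * \sum_(i < n) E (x i) * y i); last by rewrite sumEx_y mulr1.
by rewrite mulr_sumr; apply: eq_bigr => i _; rewrite HEr // mulrA.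
Qed.
Lemma hat_E v : hat E v = E v.
Proof.
rewrite /hat; transitivity ((\sum_(i < n) x i * E (y i)) * E v); last by rewrite sumx_Ey mul1r.
by rewrite mulr_suml; apply: eq_bigr => i _; rewrite HEl // mulrA.
Qed.

Lemma tlZ d (c : k) v : tl d (c *: v) = c *: tl d v.
Proof. by rewrite /tl scaler_sumr; apply: eq_bigr => i _; rewrite -scalerAl EZ scalerAl. Qed.

Lemma EM_tl (d : M -> M) c : EMs (E \o lmul c \o d) = lam *: tl d c.
Proof. by []. Qed.

Lemma qbu_eq i : qbus i = lmul (lam^-1 *: x i) \o E.
Proof. by apply: functional_extensionality => z; rewrite /qbu /lmul /= scalerAl. Qed.

Lemma EM_qbu i : EMs (qbus i) = x i.
Proof.
rewrite qbu_eq EM_T T_lmulE scalerA mulfV // scale1r //.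
Qed.

Definition Bl (Phi : M2T M) := forall m X, Phi (lmul m \o X) = lmul m \o Phi X.

Lemma inB_Bl Phi : inBs Phi -> Bl Phi.
Proof. by case=> _ H m X; have := congr1 (fun F => F X) (H m). Qed.

Lemma fsum_rlin (I : finType) (F : I -> M -> M) : (forall i, rlin (F i)) -> rlin (fun z => \sum_i F i z).
Proof.
move=> H; split.
  by move=> a b; rewrite -big_split; apply: eq_bigr => i _; case: (H i) => ->.
by move=> u z Hu; rewrite mulr_suml; apply: eq_bigr => i _; case: (H i) => _ ->.
Qed.

Lemma inM2_add Phi : inM2s Phi -> forall (I : finType) (F : I -> M -> M),
  (forall i, rlin (F i)) -> Phi (fun z => \sum_i F i z) = fun z => \sum_i Phi (F i) z.
Proof.
case=> q [P [Q [HPQ ->]]] I F HF; apply: functional_extensionality => z /=.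
rewrite exchange_big /=; apply: eq_bigr => i _.
case: (HPQ i) => /inM1_rlin HP /inM1_rlin HQ.
rewrite -(rlin_sum _ _ _ HP); congr (P i _).
rewrite -mulr_suml; congr (_ * z).
rewrite /EM -scaler_sumr; congr (_ *: _).
rewrite exchange_big /=; apply: eq_bigr => j _.
by rewrite /= (rlin_sum _ _ _ HQ) mulr_suml.
Qed.

Lemma inM2_right Phi X m : inM2s Phi -> rlin X -> Phi (X \o lmul m) = Phi X \o lmul m.
Proof.
case=> q [P [Q [HPQ ->]]] HX; apply: functional_extensionality => z /=.
apply: eq_bigr => i _; case: (HPQ i) => _ /inM1_rlin HQ.
congr (P i _); rewrite /lmul mulrA; congr (_ * z).
have HQX : rlin (Q i \o X).
  split; first by move=> a b /=; case: HX => -> _; case: HQ => ->.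
  by move=> u w Hu /=; rewrite (proj2 HX _ _ Hu) (proj2 HQ _ _ Hu).
by rewrite /EM -scalerAl; congr (_ *: _); have := T_lmul m HQX.
Qed.

Lemma lmulE_rlin w : rlin (lmul w \o E).
Proof. by split; [move=> a b; rewrite /lmul /= HEadd mulrDr | move=> u z Hu; rewrite /lmul /= HEr // mulrA]. Qed.

Lemma inB_rep Phi X : inBs Phi -> rlin X ->
  Phi X = fun z => \sum_(kk < n) X (x kk) * Phi E (y kk * z).
Proof.
move=> HB HX.
transitivity (Phi (fun z => \sum_(kk < n) (lmul (X (x kk)) \o E \o lmul (y kk)) z)).
  by congr Phi; apply: functional_extensionality => z; rewrite (expand _ HX).
rewrite (inM2_add (proj1 HB)); last first.
  move=> i; split; first by move=> a b; rewrite /lmul /= mulrDr HEadd mulrDr.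
  by move=> u z Hu; rewrite /lmul /= mulrA HEr // mulrA.
apply: functional_extensionality => z; apply: eq_bigr => i _.
rewrite (inM2_right _ (proj1 HB) (lmulE_rlin _)) /=.
by rewrite (inB_Bl HB).
Qed.

Lemma inM2_rlin Phi X : inM2s Phi -> rlin (Phi X).
Proof.
case=> q [P [Q [HPQ ->]]]; apply: fsum_rlin => i.
case: (HPQ i) => /inM1_rlin HP _; split.
  by move=> a b; rewrite mulrDr; case: HP => ->.
by move=> u z Hu; rewrite mulrA; case: HP => _ ->.
Qed.

Lemma inB_blin Phi : inBs Phi -> blin (Phi E).
Proof.
move=> HB; split; first exact: inM2_rlin (proj1 HB).
move=> u z Hu.
have H1 : lmul u \o E = E \o lmul u.
  by apply: functional_extensionality => w; rewrite /lmul /= HEl.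
have := congr1 (fun F => F z) (inB_Bl HB u E); rewrite H1 (inM2_right _ (proj1 HB) Erlin) /=.
by rewrite /lmul.
Qed.

Definition bb (b : M -> M) : M2T M := fun X z => \sum_(kk < n) X (x kk) * b (y kk * z).
Arguments bb b X z : simpl never.

Lemma bb_qbu b i w : blin b -> bb b (qbus i) w = lam^-1 *: (x i * b w).
Proof.
move=> Hb; rewrite /bb /qbu.
transitivity (lam^-1 *: (x i * \sum_(kk < n) E (x kk) * b (y kk * w))).
  rewrite mulr_sumr scaler_sumr; apply: eq_bigr => kk _.
  by rewrite -scalerAl mulrA.
congr (_ *: (_ * _)); rewrite -[in RHS](mul1r w) -sumEx_y mulr_suml (blin_sum _ _ _ Hb).
by apply: eq_bigr => kk _; rewrite -mulrA [b (E _ * _)](blin_l _ Hb).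
Qed.

Lemma bb_rlin b X : blin b -> rlin (bb b X).
Proof.
move=> Hb; apply: (@fsum_rlin _ (fun kk z => X (x kk) * b (y kk * z))) => kk; split.
  by move=> a c; rewrite mulrDr (blin_add _ _ Hb) mulrDr.
by move=> u z Hu; rewrite mulrA (blin_r _ Hb Hu) mulrA.
Qed.

Lemma qbv_rlin i : rlin (qbvs i).
Proof. by split; [move=> a c; rewrite /qbv mulrDr HEadd | move=> u z Hu; rewrite /qbv mulrA HEr]. Qed.

Lemma bb_inB b : blin b -> inBs (bb b).
Proof.
move=> Hb; split; last first.
  move=> m; apply: functional_extensionality => X; apply: functional_extensionality => z.
  by rewrite /= /iM12 /= /bb /lmul mulr_sumr; apply: eq_bigr => kk _; rewrite mulrA.
exists n, (fun i => bb b (qbus i)), qbvs; split.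
  by move=> i; split; [apply: rlin_inM1; exact: bb_rlin | apply: rlin_inM1; exact: qbv_rlin].
apply: functional_extensionality => X; apply: functional_extensionality => z.
transitivity (\sum_(j < n) \sum_(i < n) x i * (E (y i * X (x j)) * b (y j * z))).
  rewrite /bb; apply: eq_bigr => j _; rewrite -{1}(Hqb2 (X (x j))) mulr_suml.
  by apply: eq_bigr => i _; rewrite mulrA.
rewrite exchange_big /=; apply: eq_bigr => i _; rewrite -mulr_sumr bb_qbu // /EM /qbv /=.
rewrite -scalerAl (blinZ _ _ Hb) -scalerAr scalerA mulVf // scale1r; congr (_ * _).
rewrite mulr_suml (blin_sum _ _ _ Hb); apply: eq_bigr => j _.
by rewrite -mulrA [b (E _ * _)](blin_l _ Hb).
Qed.

Lemma bbE b : blin b -> bb b E = b.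
Proof.
move=> Hb; apply: functional_extensionality => z; rewrite /bb.
rewrite -[in RHS](mul1r z) -sumEx_y mulr_suml (blin_sum _ _ _ Hb).
by apply: eq_bigr => kk _; rewrite -mulrA [b (E _ * _)](blin_l _ Hb).
Qed.


Lemma EM_Elmul (d : M -> M) i : EMs (E \o (lmul (lam^-1 *: x i) \o d)) = tl d (x i).
Proof.
rewrite /EM /= -/(tl d (lam^-1 *: x i)) tlZ scalerA mulfV // scale1r //.
Qed.

Lemma pair_formula a Phi : rlin a -> Bl Phi -> pairs a Phi = T (a \o tl (Phi E)).
Proof.
move=> Ha HB.
have H1 : EM1s (iM12 a \o e2s \o iM12 (e1 E) \o Phi) =
          fun z => lam *: \sum_(i < n) a (tl (Phi E) (x i) * E (y i * z)).
  apply: functional_extensionality => z; rewrite /EM1; congr (_ *: _).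
  apply: eq_bigr => i _; rewrite /= /iM12 /e2 /e1 /= qbu_eq HB.
  by rewrite EM_Elmul.
rewrite /pairing /Fmap H1 /EM.
transitivity (lam ^- 2 *: (lam *: (lam *: T (a \o tl (Phi E))))); last first.
  by rewrite !scalerA -expr2 mulVf ?expf_neq0 // scale1r.
congr (_ *: (_ *: _)).
under eq_bigr => j _ do rewrite -scalerAl.
rewrite -scaler_sumr; congr (_ *: _).
under eq_bigr => j _ do rewrite mulr_suml.
rewrite exchange_big /T; apply: eq_bigr => i _ /=.
under eq_bigr => j _ do rewrite (proj2 Ha) // -mulrA.
by rewrite -mulr_sumr Hqb1.
Qed.

Lemma epsA_eq a : rlin a -> epsA E x y lam a = a 1.
Proof.
move=> Ha; rewrite /epsA pair_formula //.
have -> : tl (id E) = E by apply: functional_extensionality => v; rewrite tl_E.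
by rewrite T_E.
Qed.

Lemma EM1_b12 Phi : inBs Phi -> EM1s (Phi \o iM12 (e1 E) \o e2s) = fun z => lam *: Phi E z.
Proof.
move=> HB; apply: functional_extensionality => z; rewrite /EM1; congr (_ *: _).
rewrite (expand z (proj1 (inB_blin HB))); apply: eq_bigr => i _.
rewrite /= /iM12 /e2 /e1 EM_qbu.
rewrite (inM2_right _ (proj1 HB) Erlin) /= /qbv /lmul.
by case: (inB_blin HB) => [[_ ->]].
Qed.

Lemma EM1_21t Phi : Bl Phi -> blin (Phi E) -> EM1s (e2s \o iM12 (e1 E) \o Phi) = fun z => lam *: tl (Phi E) z.
Proof.
move=> HB Hb; apply: functional_extensionality => z; rewrite /EM1; congr (_ *: _).
rewrite (expand z (proj1 (tl_blin Hb))); apply: eq_bigr => i _.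
by rewrite /= /iM12 /e2 /e1 qbu_eq HB EM_Elmul /lmul /qbv.
Qed.

Lemma antiB_eq b t : inBs b -> antipodeB E x y lam b t -> forall z, b E z = tl (t E) z.
Proof.
move=> Hb [Ht Heq] z.
have := congr1 (fun F => F z) Heq; rewrite EM1_b12 // EM1_21t; [|exact: inB_Bl|exact: inB_blin].
by move/(congr1 (fun v => lam^-1 *: v)); rewrite !scalerA mulVf // !scale1r.
Qed.

Lemma antiB_mk tau : blin tau -> antipodeB E x y lam (bb (tl tau)) (bb tau).
Proof.
move=> Ht; split; first exact: bb_inB.
rewrite EM1_b12; last exact: bb_inB (tl_blin Ht).
rewrite EM1_21t; [|exact: inB_Bl (bb_inB Ht)|by rewrite bbE].
by rewrite !bbE //; exact: tl_blin.
Qed.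

Lemma inM2_pointwise Phi Y z : inM2s Phi ->
  Phi Y z = \sum_(j < n) Phi (lmul (Y (x j)) \o E) (y j * z).
Proof.
case=> q [P [Q [HPQ ->]]] /=; rewrite exchange_big /=; apply: eq_bigr => l _.
case: (HPQ l) => /inM1_rlin HP /inM1_rlin HQ.
rewrite /EM -scalerAl mulr_suml scaler_sumr (rlin_sum _ _ _ HP); apply: eq_bigr => j _.
congr (P l _); rewrite /lmul /= -scalerAl -mulrA; congr (_ *: (_ * _)).
transitivity (Q l (Y (x j)) * \sum_(i < n) E (x i) * y i); first by rewrite sumEx_y mulr1.
by rewrite mulr_sumr; apply: eq_bigr => i _; rewrite (proj2 HQ) // mulrA.
Qed.

Lemma inB_rep_all Phi Y : inBs Phi -> Phi Y = fun z => \sum_(kk < n) Y (x kk) * Phi E (y kk * z).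
Proof.
move=> HB; apply: functional_extensionality => z; rewrite (inM2_pointwise _ _ (proj1 HB)).
by apply: eq_bigr => kk _; rewrite (inB_Bl HB).
Qed.

Definition star (b b' : M -> M) := fun z => \sum_(kk < n) b' (x kk) * b (y kk * z).
Arguments star b b' z : simpl never.

Lemma comp_E b b' : inBs b -> inBs b' -> (b \o b') E = star (b E) (b' E).
Proof. by move=> Hb Hb'; rewrite /= (inB_rep_all _ Hb). Qed.

Lemma Bl_comp b b' : Bl b -> Bl b' -> Bl (b \o b').
Proof. by move=> H H' m X; rewrite /= H' H. Qed.

Lemma tensor_tl (Phi : M -> M -> M) d :
  (forall a b t, Phi (a + b) t = Phi a t + Phi b t) ->
  (forall s a b, Phi s (a + b) = Phi s a + Phi s b) ->
  (forall s u t, u \in N -> Phi (s * u) t = Phi s (u * t)) -> blin d ->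
  \sum_(kk < n) Phi (d (x kk)) (y kk) = \sum_(kk < n) Phi (x kk) (tl d (y kk)).
Proof.
move=> H1 H2 H3 Hd.
have S1 : forall I (r : seq I) (P : pred I) F t, Phi (\sum_(i <- r | P i) F i) t = \sum_(i <- r | P i) Phi (F i) t.
  by move=> I r P F t; exact: (@add_sum (fun s => Phi s t) (fun a b => H1 a b t)).
have S2 : forall I (r : seq I) (P : pred I) F s, Phi s (\sum_(i <- r | P i) F i) = \sum_(i <- r | P i) Phi s (F i).
  by move=> I r P F s; exact: (@add_sum (Phi s) (H2 s)).
transitivity (\sum_(j < n) \sum_(kk < n) Phi (x kk * E (y kk * d (x j))) (y j)).
  by apply: eq_bigr => j _; rewrite -S1 Hqb2.
rewrite exchange_big /=; apply: eq_bigr => kk _; rewrite /tl S2.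
by apply: eq_bigr => j _; rewrite H3.
Qed.

Lemma tl_star b b' z : blin b -> blin b' ->
  tl (star b b') z = \sum_(kk < n) tl b (z * x kk) * tl b' (y kk).
Proof.
move=> Hb Hb'; apply: E_nondeg_r => v.
rewrite tlE; last first.
  split; first split.
  - by move=> s t; rewrite /star -big_split; apply: eq_bigr => kk _; rewrite mulrDr (blin_add _ _ Hb) mulrDr.
  - by move=> u w Hu; rewrite /star mulr_suml; apply: eq_bigr => kk _; rewrite mulrA (blin_r _ Hb Hu) mulrA.
  - move=> u w Hu; rewrite /star mulr_sumr.
    transitivity (\sum_(kk < n) b' (x kk) * b (y kk * u * w)).
      by apply: eq_bigr => kk _; rewrite mulrA.
    rewrite -(@casimir (fun s t => b' s * b (t * w))).
    + by apply: eq_bigr => kk _; rewrite (blin_l _ Hb') // mulrA.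
    + by move=> a c t; rewrite (blin_add _ _ Hb') mulrDl.
    + by move=> s a c; rewrite mulrDl (blin_add _ _ Hb) mulrDr.
    + by move=> s u' t Hu'; rewrite (blin_r _ Hb' Hu') -[u' * t * w]mulrA (blin_l _ Hb Hu') mulrA.
rewrite mulr_suml Esum /star mulr_sumr Esum.
have -> : \sum_(kk < n) E (z * (b' (x kk) * b (y kk * v))) = \sum_(kk < n) E (z * x kk * b (tl b' (y kk) * v)).
  have T1 := @tensor_tl (fun s t => E (z * s * b (t * v))) b'.
  rewrite /= in T1; rewrite -T1 //.
  - by apply: eq_bigr => kk _; rewrite mulrA.
  - by move=> a c t; rewrite mulrDr mulrDl HEadd.
  - by move=> s a c; rewrite mulrDl (blin_add _ _ Hb) mulrDr HEadd.
  - by move=> s u t Hu; rewrite mulrA -[u * t * v]mulrA (blin_l _ Hb Hu) mulrA.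
by apply: eq_bigr => kk _; rewrite -[tl b _ * _ * v]mulrA (tlE _ _ Hb).
Qed.

Lemma blin_comp f g' : blin f -> blin g' -> blin (f \o g').
Proof.
move=> Hf Hg; split; first split.
- by move=> a b /=; rewrite (blin_add _ _ Hg) (blin_add _ _ Hf).
- by move=> u z Hu /=; rewrite (blin_r _ Hg Hu) (blin_r _ Hf Hu).
- by move=> u z Hu /=; rewrite (blin_l _ Hg Hu) (blin_l _ Hf Hu).
Qed.

Lemma T_tlstar a b b' : blin a -> blin b -> blin b' ->
  T (a \o tl (star b b')) = \sum_(kk < n) \sum_(j < n) a (tl b (x kk) * tl b' (x j)) * y j * y kk.
Proof.
move=> Ha Hb Hb'; have Htb := tl_blin Hb; have Htb' := tl_blin Hb'.
rewrite /T /=.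
transitivity (\sum_(i < n) \sum_(kk < n) a (tl b (x kk) * tl b' (y kk * x i)) * y i).
  apply: eq_bigr => i _; rewrite tl_star // -mulr_suml -(blin_sum _ _ _ Ha); congr (a _ * _).
  rewrite (@casimir (fun s t => tl b s * tl b' t)) //.
  - by move=> s c t; rewrite (blin_add _ _ Htb) mulrDl.
  - by move=> s c t; rewrite (blin_add _ _ Htb') mulrDr.
  - by move=> s u t Hu; rewrite (blin_r _ Htb Hu) (blin_l _ Htb' Hu) mulrA.
rewrite exchange_big /=; apply: eq_bigr => kk _.
transitivity (\sum_(i < n) \sum_(j < n) a (tl b (x kk) * tl b' (x j)) * E (y j * y kk * x i) * y i).
  apply: eq_bigr => i _; rewrite (expand (y kk * x i) (proj1 Htb')) mulr_sumr (blin_sum _ _ _ Ha) mulr_suml.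
  by apply: eq_bigr => j _; rewrite mulrA (blin_r _ Ha) // !mulrA.
rewrite exchange_big; apply: eq_bigr => j _.
transitivity (a (tl b (x kk) * tl b' (x j)) * \sum_(i < n) E (y j * y kk * x i) * y i).
  by rewrite [in RHS]mulr_sumr; apply: eq_bigr => i _; rewrite !mulrA.
by rewrite Hqb1 !mulrA.
Qed.

Lemma L1 a q (a1 a2 : 'I_q -> M -> M) b b' : blin a -> (forall i, blin (a1 i) /\ blin (a2 i)) ->
  (forall u v, a (u * v) = \sum_(i < q) a1 i u * a2 i v) -> inBs b -> inBs b' ->
  \sum_(i < q) pairs (a1 i) b * pairs (a2 i) b' = pairs a (b \o b').
Proof.
move=> Ha H12 Hd Hb Hb'.
have HbE := inB_blin Hb; have Hb'E := inB_blin Hb'.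
rewrite pair_formula; [| exact: proj1 Ha | exact: Bl_comp (inB_Bl Hb) (inB_Bl Hb')].
rewrite comp_E // T_tlstar // -[in RHS]/(fun kk : 'I_n => _).
transitivity (\sum_(i < q) \sum_(kk < n) \sum_(j < n) a1 i (tl (b E) (x kk)) * a2 i (tl (b' E) (x j)) * y j * y kk).
  apply: eq_bigr => i _; case: (H12 i) => H1 H2.
  rewrite !pair_formula; [|exact: proj1 H2|exact: inB_Bl|exact: proj1 H1|exact: inB_Bl].
  rewrite {1}/T mulr_suml; apply: eq_bigr => kk _.
  have Hc : central (T (a2 i \o tl (b' E))) by apply: T_central; apply: blin_comp => //; exact: tl_blin.
  rewrite -mulrA -(centralC _ Hc) mulrA /T mulr_sumr mulr_suml; apply: eq_bigr => j _.
  by rewrite /= !mulrA.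
rewrite exchange_big /=; apply: eq_bigr => kk _; rewrite exchange_big /=; apply: eq_bigr => j _.
by rewrite -!mulr_suml -Hd.
Qed.

Variables (p2 : nat) (h : 'I_p2 -> M2T M).
Hypothesis Hh_B : forall i, inBs (h i).
Hypothesis Hh_span : forall Phi, inM2s Phi -> exists c : 'I_p2 -> M1T M,
  (forall i, inM1 E (c i)) /\ Phi = fun X z => \sum_(i < p2) h i (c i \o X) z.
Hypothesis Hh_uniq : forall c c' : 'I_p2 -> M1T M, (forall i, inM1 E (c i) /\ inM1 E (c' i)) ->
  (fun X z => \sum_(i < p2) h i (c i \o X) z) = (fun X z => \sum_(i < p2) h i (c' i \o X) z) ->
  forall i, c i = c' i.

Definition eta i := h i E.
Lemma eta_blin i : blin (eta i).
Proof. exact: inB_blin. Qed.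

Lemma zero_rlin : rlin (fun _ : M => 0).
Proof. by split=> [a b|u z Hu]; rewrite ?addr0 ?mul0r. Qed.

Lemma indep (Z : 'I_p2 -> M -> M) : (forall i, rlin (Z i)) ->
  (forall q r, \sum_(i < p2) Z i q * eta i r = 0) -> forall i q, Z i q = 0.
Proof.
move=> HZ H0 i q.
have := @Hh_uniq Z (fun _ _ => 0).
move=> /(_ _ _ i) /(congr1 (fun f => f q)) -> //.
  by move=> j; split; apply: rlin_inM1; [exact: HZ | exact: zero_rlin].
apply: functional_extensionality => X; apply: functional_extensionality => z.
under eq_bigr => j _ do rewrite (inB_rep_all _ (Hh_B j)).
under [RHS]eq_bigr => j _ do rewrite (inB_rep_all _ (Hh_B j)).
rewrite exchange_big /= big1; last by move=> kk _; rewrite -/(eta _); apply: H0.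
by rewrite big1 // => j _; rewrite big1 // => kk _; rewrite mul0r.
Qed.

Definition Dspec (a : M -> M) (D : 'I_p2 -> M -> M) :=
  (forall i, blin (D i)) /\ forall q r, a (q * r) = \sum_(i < p2) D i q * eta i r.

Lemma D_unique a D D' : (forall i, rlin (D i)) -> (forall i, rlin (D' i)) ->
  (forall q r, a (q * r) = \sum_(i < p2) D i q * eta i r) ->
  (forall q r, a (q * r) = \sum_(i < p2) D' i q * eta i r) -> forall i q, D i q = D' i q.
Proof.
move=> HD HD' H H' i q; apply/eqP; rewrite -subr_eq0; apply/eqP.
apply: (@indep (fun i q => D i q - D' i q)) => [j|q' r].
  split; first by move=> s t; case: (HD j) => -> _; case: (HD' j) => -> _; rewrite opprD addrACA.
  by move=> u z Hu; rewrite mulrBl (proj2 (HD j) _ _ Hu) (proj2 (HD' j) _ _ Hu).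
under eq_bigr => j _ do rewrite mulrBl.
by rewrite sumrB -H -H' subrr.
Qed.

Lemma D_exists a : blin a -> exists D, Dspec a D.
Proof.
move=> Ha.
have HPhi : inM2s (fun X z => a (EMs X * z)).
  exists 1%N, (fun _ => a), (fun _ => id); split.
    by move=> _; split; apply: rlin_inM1; [exact: proj1 Ha | split].
  by apply: functional_extensionality => X; apply: functional_extensionality => z; rewrite big_ord1.
case: (Hh_span HPhi) => c [Hc Heq].
have key : forall q r, lam *: a (q * r) = \sum_(i < p2) c i q * eta i r.
  move=> q r; have := congr1 (fun F => F (lmul q \o E) r) Heq => /=.
  rewrite EM_T T_lmulE -scalerAl (blinZ _ _ Ha) => ->.
  apply: eq_bigr => i _; rewrite (inB_rep_all _ (Hh_B i)) -/(eta i).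
  have Hci := inM1_rlin (Hc i).
  rewrite -[in RHS](mul1r r) -sumEx_y mulr_suml (blin_sum _ _ _ (eta_blin i)) mulr_sumr.
  apply: eq_bigr => kk _; rewrite /lmul /= (proj2 Hci) // -!mulrA.
  by rewrite [eta i (E _ * _)](blin_l _ (eta_blin i)).
pose D i q := lam^-1 *: c i q.
have HDr : forall i, rlin (D i).
  move=> i; have Hci := inM1_rlin (Hc i); split.
    by move=> s t; rewrite /D (proj1 Hci) scalerDr.
  by move=> u z Hu; rewrite /D (proj2 Hci) // scalerAl.
have HD : forall q r, a (q * r) = \sum_(i < p2) D i q * eta i r.
  move=> q r; rewrite -[LHS]scale1r -(mulVf Hlam) -scalerA key scaler_sumr.
  by apply: eq_bigr => i _; rewrite scalerAl.
exists D; split => // i; split => // u q Hu.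
have := @D_unique (fun z => a (u * z)) (fun i z => D i (u * z)) (fun i z => u * D i z).
move=> /(_ _ _ _ _ i q) -> //.
- move=> j; split; first by move=> s t; rewrite mulrDr (proj1 (HDr j)).
  by move=> v z Hv; rewrite mulrA (proj2 (HDr j)).
- move=> j; split; first by move=> s t; rewrite (proj1 (HDr j)) mulrDr.
  by move=> v z Hv; rewrite (proj2 (HDr j)) // mulrA.
- by move=> s t; rewrite mulrA HD.
- by move=> s t; rewrite (blin_l _ Ha Hu) HD mulr_sumr; apply: eq_bigr => j _; rewrite mulrA.
Qed.

Definition Dc (a : M -> M) : 'I_p2 -> M -> M :=
  epsilon (inhabits (fun (_ : 'I_p2) (_ : M) => (0 : M))) (Dspec a).

Lemma Dc_spec a : blin a -> Dspec a (Dc a).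
Proof. by move=> Ha; apply: epsilon_spec; exact: D_exists. Qed.

Lemma Dc_blin a i : blin a -> blin (Dc a i).
Proof. by move=> Ha; case: (Dc_spec Ha). Qed.
Lemma Dc_eq a q r : blin a -> a (q * r) = \sum_(i < p2) Dc a i q * eta i r.
Proof. by move=> Ha; case: (Dc_spec Ha) => _ ->. Qed.

Definition kap i := Dc E i.
Lemma kap_blin i : blin (kap i).
Proof. exact: Dc_blin Eblin. Qed.

Lemma ldb g' z : blin g' -> g' z = \sum_(i < p2) R g' (kap i) * eta i z.
Proof.
move=> Hg; rewrite (expand z (proj1 Hg)).
transitivity (\sum_(j < n) \sum_(i < p2) g' (x j) * kap i (y j) * eta i z).
  by apply: eq_bigr => j _; rewrite (Dc_eq _ _ Eblin) mulr_sumr; apply: eq_bigr => i _; rewrite mulrA.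
by rewrite exchange_big; apply: eq_bigr => i _; rewrite /R mulr_suml.
Qed.

Lemma R_hatT g' kk : blin g' -> blin kk -> R g' kk = T (g' \o hat kk).
Proof.
move=> Hg Hk; rewrite /T /R /hat /=; symmetry.
transitivity (\sum_(i < n) \sum_(j < n) g' (x j) * E (kk (y j) * x i) * y i).
  by apply: eq_bigr => i _; rewrite (blin_sum _ _ _ Hg) mulr_suml; apply: eq_bigr => j _; rewrite (blin_r _ Hg).
rewrite exchange_big; apply: eq_bigr => j _.
by rewrite -[in RHS](Hqb1 (kk (y j))) mulr_sumr; apply: eq_bigr => i _; rewrite !mulrA.
Qed.

Lemma R_pair g' kk : blin g' -> blin kk -> R g' kk = pairs g' (bb (hat (hat kk))).
Proof.
move=> Hg Hk; have Hh := hat_blin (hat_blin Hk).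
rewrite pair_formula; [|exact: proj1 Hg|exact: inB_Bl (bb_inB Hh)].
rewrite bbE //; have -> : tl (hat (hat kk)) = hat kk.
  by apply: functional_extensionality => v; rewrite tl_hat //; exact: hat_blin.
exact: R_hatT.
Qed.

Lemma T_nondeg Z : blin Z -> (forall kk, blin kk -> T (Z \o kk) = 0) -> forall z, Z z = 0.
Proof.
move=> HZ H z; rewrite (ldb _ HZ) big1 // => i _.
have Hk := kap_blin i.
by rewrite R_hatT // H ?mul0r //; exact: hat_blin.
Qed.

Lemma TT' b : blin b -> T b = T' b.
Proof.
move=> Hb.
have Z1 : forall m, \sum_(kk < n) x kk * b (y kk * m) = m * T' b.
  move=> m; rewrite /T' mulr_sumr.
  rewrite -(@casimir (fun s t => s * b t)).
  - by apply: eq_bigr => kk _; rewrite mulrA.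
  - by move=> a c t; rewrite mulrDl.
  - by move=> s a c; rewrite (blin_add _ _ Hb) mulrDr.
  - by move=> s u t Hu; rewrite (blin_l _ Hb Hu) mulrA.
have Z2 : forall m, \sum_(j < n) b (m * x j) * y j = T b * m.
  move=> m; rewrite /T mulr_suml.
  transitivity (\sum_(j < n) \sum_(i < n) b (x i) * E (y i * m * x j) * y j).
    by apply: eq_bigr => j _; rewrite (expand _ (proj1 Hb)) mulr_suml; apply: eq_bigr => i _; rewrite !mulrA.
  rewrite exchange_big; apply: eq_bigr => i _.
  by rewrite -mulrA -[in RHS](Hqb1 (y i * m)) mulr_sumr; apply: eq_bigr => j _; rewrite !mulrA.
have HT := T_central Hb; have HT' := T'_central Hb.
have E1 : \sum_(j < n) \sum_(kk < n) x kk * b (y kk * x j) * y j = T' b * lam^-1%:A.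
  rewrite -Hxy mulr_sumr; apply: eq_bigr => j _.
  by rewrite -mulr_suml Z1 -(centralC (x j) HT') mulrA.
have E2 : \sum_(j < n) \sum_(kk < n) x kk * b (y kk * x j) * y j = T b * lam^-1%:A.
  rewrite exchange_big -Hxy mulr_sumr; apply: eq_bigr => kk _.
  rewrite [RHS]mulrA (centralC (x kk) HT) -mulrA -Z2 mulr_sumr; apply: eq_bigr => j _; by rewrite !mulrA.
have := congr1 (fun v => v * lam%:A) (etrans (esym E1) E2).
by rewrite -!mulrA !mulr_algl scalerA mulVf // scale1r !mulr1 => ->.
Qed.

Lemma expand2 q (a1 a2 : 'I_q -> M -> M) u v : (forall i, blin (a1 i) /\ blin (a2 i)) ->
  \sum_(i < q) a1 i u * a2 i v =
  \sum_(r < p2) \sum_(r' < p2) (\sum_(i < q) R (a1 i) (kap r) * R (a2 i) (kap r')) * (eta r u * eta r' v).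
Proof.
move=> H12.
transitivity (\sum_(i < q) \sum_(r < p2) \sum_(r' < p2) R (a1 i) (kap r) * R (a2 i) (kap r') * (eta r u * eta r' v)).
  apply: eq_bigr => i _; case: (H12 i) => H1 H2.
  rewrite (ldb u H1) (ldb v H2) mulr_suml; apply: eq_bigr => r _; rewrite mulr_sumr; apply: eq_bigr => r' _.
  have Hc : central (R (a2 i) (kap r')) by apply: R_central => //; exact: kap_blin.
  by rewrite -!mulrA; congr (_ * _); rewrite !mulrA (centralC _ Hc).
rewrite exchange_big; apply: eq_bigr => r _; rewrite exchange_big; apply: eq_bigr => r' _.
by rewrite mulr_suml.
Qed.

Definition Bk r := bb (hat (hat (kap r))).
Lemma Bk_inB r : inBs (Bk r).
Proof. by apply: bb_inB; apply: hat_blin; apply: hat_blin; exact: kap_blin. Qed.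

Lemma coprod_classical a q (a1 a2 : 'I_q -> M -> M) : blin a -> coprodA N E x y lam a a1 a2 ->
  forall u v, a (u * v) = \sum_(i < q) a1 i u * a2 i v.
Proof.
move=> Ha [H12 Hp] u v.
have H12' : forall i, blin (a1 i) /\ blin (a2 i).
  by move=> i; case: (H12 i) => /inA_blin ? /inA_blin ?.
have HD : forall i, blin (Dc a i) /\ blin (eta i) by move=> i; split; [exact: Dc_blin | exact: eta_blin].
rewrite (Dc_eq _ _ Ha) (expand2 _ _ HD) (expand2 _ _ H12').
apply: eq_bigr => r _; apply: eq_bigr => r' _; congr (_ * _).
have Hk := kap_blin.
transitivity (\sum_(i < q) pairs (a1 i) (Bk r) * pairs (a2 i) (Bk r')); last first.
  by apply: eq_bigr => i _; rewrite -!R_pair //; case: (H12' i).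
rewrite Hp; try exact: Bk_inB.
rewrite -(@L1 a p2 (Dc a) eta) //; try exact: Bk_inB.
  by apply: eq_bigr => i _; rewrite -!R_pair //; case: (HD i).
by move=> u' v'; apply: Dc_eq.
Qed.

Variables (p : nat) (g : 'I_p -> M -> M).
Hypothesis Hg_A : forall i, inAs (g i).
Hypothesis Hg_span : forall X, inM1 E X -> exists c : 'I_p -> M, X = fun z => \sum_(i < p) g i (c i * z).
Hypothesis Hg_uniq : forall c c' : 'I_p -> M,
  (fun z => \sum_(i < p) g i (c i * z)) = (fun z => \sum_(i < p) g i (c' i * z)) -> forall i, c i = c' i.

Lemma g_blin i : blin (g i).
Proof. exact: inA_blin. Qed.

Definition coord (X : M -> M) : 'I_p -> M :=
  epsilon (inhabits (fun _ : 'I_p => (0 : M))) (fun c => X = fun z => \sum_(i < p) g i (c i * z)).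

Lemma coord_spec X z : rlin X -> X z = \sum_(i < p) g i (coord X i * z).
Proof.
move=> HX; have := @epsilon_spec _ (inhabits (fun _ : 'I_p => (0 : M))) (fun c => X = fun z => \sum_(i < p) g i (c i * z)).
by move=> /(_ (Hg_span (rlin_inM1 HX))) /(congr1 (fun F => F z)).
Qed.

Lemma coord_eq X c i : rlin X -> (forall z, X z = \sum_(j < p) g j (c j * z)) -> coord X i = c i.
Proof.
move=> HX H; apply: Hg_uniq; apply: functional_extensionality => z.
by rewrite -H -coord_spec.
Qed.

Definition phi (c : M -> M) i := fun q => coord (lmul q \o c) i.

Lemma lmul_rlin q c : rlin c -> rlin (lmul q \o c).
Proof. by move=> Hc; split=> [a b|u z Hu]; rewrite /lmul /= ?(proj1 Hc) ?mulrDr // (proj2 Hc) // mulrA. Qed.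

Lemma phi_spec c q r : blin c -> q * c r = \sum_(i < p) g i (phi c i q * r).
Proof. by move=> Hc; rewrite /phi -(coord_spec r (lmul_rlin q (proj1 Hc))). Qed.

Lemma phi_blin c i : blin c -> blin (phi c i).
Proof.
move=> Hc; have Hg := g_blin; split; first split.
- move=> a b; rewrite /phi (@coord_eq _ (fun j => phi c j a + phi c j b)) //; first exact: lmul_rlin (proj1 Hc).
  move=> z; rewrite /lmul /= mulrDl !phi_spec // -big_split; apply: eq_bigr => j _.
  by rewrite mulrDl (blin_add _ _ (Hg j)).
- move=> u a Hu; rewrite /phi (@coord_eq _ (fun j => phi c j a * u)) //; first exact: lmul_rlin (proj1 Hc).
  by move=> z; rewrite /lmul /= -mulrA -(blin_l _ Hc Hu) (phi_spec a (u * z) Hc); apply: eq_bigr => j _; rewrite mulrA.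
- move=> u a Hu; rewrite /phi (@coord_eq _ (fun j => u * phi c j a)) //; first exact: lmul_rlin (proj1 Hc).
  move=> z; rewrite /lmul /= -mulrA (phi_spec a z Hc) mulr_sumr; apply: eq_bigr => j _.
  by rewrite -(blin_l _ (Hg j) Hu) mulrA.
Qed.

Lemma tl_phi c pp w : blin c -> tl c (pp * w) = \sum_(i < p) tl (g i) pp * phi c i w.
Proof.
move=> Hc; apply: E_nondeg_r => v; rewrite tlE // mulr_suml Esum.
rewrite -mulrA (phi_spec _ _ Hc) mulr_sumr Esum; apply: eq_bigr => i _.
by rewrite -mulrA (tlE _ _ (g_blin i)).
Qed.

Lemma central_blin_mul f (c : M) : central c -> blin f -> blin (fun z => c * f z).
Proof.
move=> Hc Hf; split; first split.
- by move=> a b; rewrite (blin_add _ _ Hf) mulrDr.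
- by move=> u z Hu; rewrite (blin_r _ Hf Hu) mulrA.
- by move=> u z Hu; rewrite (blin_l _ Hf Hu) !mulrA (centralC _ Hc).
Qed.

Lemma sum_blin (I : finType) (F : I -> M -> M) : (forall i, blin (F i)) -> blin (fun z => \sum_i F i z).
Proof.
move=> H; split; first exact: fsum_rlin (fun i => proj1 (H i)).
by move=> u z Hu; rewrite mulr_sumr; apply: eq_bigr => i _; rewrite (blin_l _ (H i) Hu).
Qed.

Lemma central_mul a b : central a -> central b -> central (a * b).
Proof. by move=> Ha Hb u Hu; rewrite -mulrA Hb // mulrA Ha // mulrA. Qed.
Lemma central_sum (I : finType) (F : I -> M) : (forall i, central (F i)) -> central (\sum_i F i).
Proof. by move=> H u Hu; rewrite mulr_suml mulr_sumr; apply: eq_bigr => i _; rewrite H. Qed.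
Lemma central_f1 f : blin f -> central (f 1).
Proof. by move=> Hf u Hu; rewrite -(blin_r _ Hf Hu) -(blin_l _ Hf Hu) mul1r mulr1. Qed.

Lemma T_add F G : T (fun z => F z + G z) = T F + T G.
Proof. by rewrite /T -big_split; apply: eq_bigr => i _; rewrite mulrDl. Qed.
Lemma T_sum (I : finType) (F : I -> M -> M) : T (fun z => \sum_i F i z) = \sum_i T (F i).
Proof. by rewrite /T exchange_big; apply: eq_bigr => i _; rewrite mulr_suml. Qed.
Lemma T_cmul c F : central c -> T (fun z => c * F z) = c * T F.
Proof. by move=> Hc; rewrite /T mulr_sumr; apply: eq_bigr => i _; rewrite mulrA. Qed.
Lemma T_ext F G : (forall z, F z = G z) -> T F = T G.
Proof. by move=> H; rewrite /T; apply: eq_bigr => i _; rewrite H. Qed.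

Definition psi i := phi E i.
Lemma psi_blin i : blin (psi i).
Proof. exact: phi_blin Eblin. Qed.

Lemma rdb g' z : blin g' -> g' z = \sum_(i < p) T (psi i \o g') * g i z.
Proof.
move=> Hg'; rewrite (expand z (proj1 Hg')).
transitivity (\sum_(kk < n) \sum_(i < p) g i (psi i (g' (x kk)) * (y kk * z))).
  by apply: eq_bigr => kk _; rewrite phi_spec //; exact: Eblin.
rewrite exchange_big; apply: eq_bigr => i _.
have Hc : central (T (psi i \o g')) by apply: T_central; apply: blin_comp => //; exact: psi_blin.
rewrite -(blin_sum _ _ _ (g_blin i)) -(blinC_l _ (g_blin i) Hc); congr (g i _).
by rewrite /T mulr_suml; apply: eq_bigr => kk _; rewrite mulrA.
Qed.

(* the antipode of A *)
Definition SP (g' : M -> M) := fun z => \sum_(i < p) T (g' \o hat (g i)) * psi i z.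

Lemma SP_blin g' : blin g' -> blin (SP g').
Proof.
move=> Hg'; apply: sum_blin => i; apply: central_blin_mul; last exact: psi_blin.
by apply: T_central; apply: blin_comp => //; apply: hat_blin; exact: g_blin.
Qed.

Lemma central_N c : central c -> c \in N.
Proof. by move=> /Hirr [c' ->]; exact: Nscal. Qed.

Lemma hat_lin (I : finType) (c : I -> M) (F : I -> M -> M) v : (forall i, central (c i)) ->
  hat (fun z => \sum_i c i * F i z) v = \sum_i c i * hat (F i) v.
Proof.
move=> Hc; rewrite /hat.
transitivity (\sum_(j < n) \sum_i c i * (x j * E (F i (y j) * v))).
  apply: eq_bigr => j _; rewrite mulr_suml Esum mulr_sumr; apply: eq_bigr => i _.
  rewrite -mulrA (HEl _ (central_N (Hc i))) mulrA -(centralC (x j) (Hc i)) -mulrA //.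
by rewrite exchange_big; apply: eq_bigr => i _; rewrite mulr_sumr.
Qed.

Lemma tl_lin (I : finType) (c : I -> M) (F : I -> M -> M) v : (forall i, central (c i)) ->
  tl (fun z => \sum_i c i * F i z) v = \sum_i c i * tl (F i) v.
Proof.
move=> Hc; rewrite /tl.
transitivity (\sum_(j < n) \sum_i c i * (E (v * F i (x j)) * y j)).
  apply: eq_bigr => j _; rewrite mulr_sumr Esum mulr_suml; apply: eq_bigr => i _.
  rewrite mulrA -(centralC v (Hc i)) -mulrA (HEl _ (central_N (Hc i))) mulrA //.
by rewrite exchange_big; apply: eq_bigr => i _; rewrite mulr_sumr.
Qed.

Lemma hat_ext F G v : (forall z, F z = G z) -> hat F v = hat G v.
Proof. by move=> H; rewrite /hat; apply: eq_bigr => i _; rewrite H. Qed.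
Lemma tl_ext F G v : (forall z, F z = G z) -> tl F v = tl G v.
Proof. by move=> H; rewrite /tl; apply: eq_bigr => i _; rewrite H. Qed.

Lemma SP_T g' W : blin g' -> blin W -> T (SP g' \o W) = T (g' \o hat W).
Proof.
move=> Hg' HW.
have Hc : forall i, central (T (psi i \o W)).
  by move=> i; apply: T_central; apply: blin_comp => //; exact: psi_blin.
have Hc' : forall i, central (T (g' \o hat (g i))).
  by move=> i; apply: T_central; apply: blin_comp => //; apply: hat_blin; exact: g_blin.
transitivity (\sum_(i < p) T (g' \o hat (g i)) * T (psi i \o W)).
  rewrite /SP /= T_sum; apply: eq_bigr => i _; rewrite T_cmul //.
transitivity (T (fun v => \sum_(i < p) T (psi i \o W) * g' (hat (g i) v))); last first.
  apply: T_ext => v /=; rewrite (hat_ext v (fun z => rdb z HW)) hat_lin // (blin_sum _ _ _ Hg').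
  by apply: eq_bigr => i _; rewrite (blinC_l _ Hg' (Hc i)).
rewrite T_sum; apply: eq_bigr => i _; rewrite T_cmul // (centralC _ (Hc' i)).
by congr (_ * _); apply: T_ext => v; rewrite /= (blinC_l _ Hg' (Hc i)).
Qed.

Lemma R_kap_central g' r : blin g' -> central (R g' (kap r)).
Proof. by move=> Hg; apply: R_central => //; exact: kap_blin. Qed.

Lemma SP_ldb g' z : blin g' -> SP g' z = \sum_(r < p2) R g' (kap r) * SP (eta r) z.
Proof.
move=> Hg; rewrite /SP.
transitivity (\sum_(i < p) \sum_(r < p2) R g' (kap r) * T (eta r \o hat (g i)) * psi i z).
  apply: eq_bigr => i _; rewrite -mulr_suml; congr (_ * _).
  rewrite -[LHS](@T_ext (fun v => \sum_(r < p2) R g' (kap r) * eta r (hat (g i) v))); last first.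
    by move=> v; rewrite /= -ldb.
  by rewrite T_sum; apply: eq_bigr => r _; rewrite T_cmul //; exact: R_kap_central.
rewrite exchange_big; apply: eq_bigr => r _; rewrite mulr_sumr; apply: eq_bigr => i _.
by rewrite mulrA.
Qed.

Lemma BMcanon g' q (X Y : 'I_q -> M -> M) : blin g' -> (forall l, blin (X l) /\ blin (Y l)) ->
  (forall u v, g' (u * v) = \sum_(l < q) X l u * Y l v) ->
  forall r z, \sum_(l < q) R (Y l) (kap r) * X l z = Dc g' r z.
Proof.
move=> Hg HXY Hd r z.
apply: (@D_unique g' (fun r z => \sum_(l < q) R (Y l) (kap r) * X l z) (Dc g')).
- move=> r'; apply: fsum_rlin => l; case: (HXY l) => HX HY; split.
    by move=> a b; rewrite (blin_add _ _ HX) mulrDr.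
  by move=> u w Hu; rewrite (blin_r _ HX Hu) mulrA.
- by move=> r'; exact: (proj1 (Dc_blin r' Hg)).
- move=> u v; rewrite Hd.
  transitivity (\sum_(l < q) \sum_(r' < p2) R (Y l) (kap r') * X l u * eta r' v).
    apply: eq_bigr => l _; case: (HXY l) => HX HY; rewrite (ldb v HY) mulr_sumr.
    apply: eq_bigr => r' _; rewrite mulrA (centralC _ (R_kap_central r' HY)) //.
  by rewrite exchange_big; apply: eq_bigr => r' _; rewrite mulr_suml.
- by move=> u v; apply: Dc_eq.
Qed.

Definition Xi g' := fun z => \sum_(r < p2) Dc g' r (SP (eta r) z).

Lemma Xi_data g' q (X Y : 'I_q -> M -> M) z : blin g' -> (forall l, blin (X l) /\ blin (Y l)) ->
  (forall u v, g' (u * v) = \sum_(l < q) X l u * Y l v) ->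
  \sum_(l < q) X l (SP (Y l) z) = Xi g' z.
Proof.
move=> Hg HXY Hd; rewrite /Xi.
transitivity (\sum_(l < q) \sum_(r < p2) R (Y l) (kap r) * X l (SP (eta r) z)).
  apply: eq_bigr => l _; case: (HXY l) => HX HY; rewrite (SP_ldb z HY) (blin_sum _ _ _ HX).
  by apply: eq_bigr => r _; rewrite (blinC_l _ HX (R_kap_central r HY)).
rewrite exchange_big; apply: eq_bigr => r _; by rewrite -(BMcanon Hg HXY Hd).
Qed.

Lemma Xi_blin g' : blin g' -> blin (Xi g').
Proof.
move=> Hg; apply: sum_blin => r; apply: blin_comp; first exact: Dc_blin.
by apply: SP_blin; exact: eta_blin.
Qed.

Lemma T_opp F : T (fun z => - F z) = - T F.
Proof. by rewrite /T -sumrN; apply: eq_bigr => i _; rewrite mulNr. Qed.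

Lemma SP_id g' z : blin g' -> \sum_(kk < p2) SP (Dc g' kk) (eta kk z) = g' 1 * z.
Proof.
move=> Hg; apply/eqP; rewrite -subr_eq0; apply/eqP.
have Hc := central_f1 Hg.
have HZ : blin (fun z => \sum_(kk < p2) SP (Dc g' kk) (eta kk z) - g' 1 * z).
  split; first split.
  - move=> a b; rewrite mulrDr opprD addrACA -big_split; congr (_ + _); apply: eq_bigr => kk _.
    by rewrite (blin_add _ _ (eta_blin kk)) (blin_add _ _ (SP_blin (Dc_blin kk Hg))).
  - move=> u w Hu; rewrite mulrBl mulr_suml mulrA; congr (_ - _); apply: eq_bigr => kk _.
    by rewrite (blin_r _ (eta_blin kk) Hu) (blin_r _ (SP_blin (Dc_blin kk Hg)) Hu).
  - move=> u w Hu; rewrite mulrBr mulr_sumr mulrA (centralC u Hc) -mulrA; congr (_ - _); apply: eq_bigr => kk _.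
    by rewrite (blin_l _ (eta_blin kk) Hu) (blin_l _ (SP_blin (Dc_blin kk Hg)) Hu).
apply: (T_nondeg HZ) => kk Hk.
transitivity (\sum_(r < p2) T (SP (Dc g' r) \o (eta r \o kk)) - g' 1 * T kk).
  rewrite -T_cmul // -T_opp -T_sum -T_add; apply: T_ext => v //.
rewrite TT' //.
transitivity (\sum_(r < p2) R (Dc g' r) (eta r \o kk) - g' 1 * T' kk).
  congr (_ - _); apply: eq_bigr => r _.
  rewrite SP_T; [|exact: Dc_blin|by apply: blin_comp => //; exact: eta_blin].
  by rewrite R_hatT //; [exact: Dc_blin|apply: blin_comp => //; exact: eta_blin].
apply/eqP; rewrite subr_eq0; apply/eqP.
transitivity (g' (T' kk)).
  rewrite /R exchange_big /T' (blin_sum _ _ _ Hg); apply: eq_bigr => j _ /=.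
  by rewrite (Dc_eq _ _ Hg).
by rewrite -{1}(mulr1 (T' kk)) (blinC_l _ Hg (T'_central Hk)) (centralC _ (T'_central Hk)).
Qed.

Lemma coassoc g' i pp q : blin g' ->
  Dc g' i (pp * q) = \sum_(i' < p2) Dc g' i' pp * Dc (eta i') i q.
Proof.
move=> Hg; apply/eqP; rewrite -subr_eq0; apply/eqP.
apply: (@indep (fun i q => Dc g' i (pp * q) - \sum_(i' < p2) Dc g' i' pp * Dc (eta i') i q)) => [j|q' r].
  split.
  - move=> a b; rewrite mulrDr (blin_add _ _ (Dc_blin j Hg)) -addrACA -opprD -big_split.
    congr (_ - _); apply: eq_bigr => i' _; rewrite (blin_add _ _ (Dc_blin j (eta_blin i'))) mulrDr //.
  - move=> u w Hu; rewrite mulrBl mulrA (blin_r _ (Dc_blin j Hg) Hu) mulr_suml; congr (_ - _).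
    by apply: eq_bigr => i' _; rewrite (blin_r _ (Dc_blin j (eta_blin i')) Hu) mulrA.
under eq_bigr => j _ do rewrite mulrBl.
rewrite sumrB -(Dc_eq _ _ Hg) -mulrA (Dc_eq _ _ Hg).
apply/eqP; rewrite subr_eq0; apply/eqP.
transitivity (\sum_(i' < p2) Dc g' i' pp * \sum_(j < p2) Dc (eta i') j q' * eta j r).
  by apply: eq_bigr => i' _; rewrite -(Dc_eq _ _ (eta_blin i')).
under eq_bigr => i' _ do rewrite mulr_sumr.
rewrite exchange_big; apply: eq_bigr => j _; rewrite mulr_suml; apply: eq_bigr => i' _.
by rewrite mulrA.
Qed.

Lemma fid g' z : blin g' -> \sum_(r < p2) Xi (Dc g' r) (eta r z) = g' z.
Proof.
move=> Hg.
transitivity (\sum_(r < p2) \sum_(i' < p2) Dc g' i' (SP (Dc (eta i') r) (eta r z))).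
  apply: eq_bigr => r _; symmetry; apply: (Xi_data _ (Dc_blin r Hg)).
    by move=> i'; split; [exact: Dc_blin | exact: Dc_blin (eta_blin i')].
  by move=> u v; apply: coassoc.
rewrite exchange_big /=.
transitivity (\sum_(i' < p2) Dc g' i' z * eta i' 1).
  apply: eq_bigr => i' _; rewrite -(blin_sum _ _ _ (Dc_blin i' Hg)) SP_id; last exact: eta_blin.
  have Hc := central_f1 (eta_blin i').
  by rewrite (blinC_l _ (Dc_blin i' Hg) Hc) (centralC _ Hc).
by rewrite -(Dc_eq _ _ Hg) mulr1.
Qed.

Lemma Xi_lin g' (I : finType) (c : I -> M) (F : I -> M -> M) z : blin g' ->
  (forall i, central (c i) /\ blin (F i)) -> (forall w, g' w = \sum_i c i * F i w) ->
  Xi g' z = \sum_i c i * Xi (F i) z.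
Proof.
move=> Hg HcF Hw.
have HD : forall r w, Dc g' r w = \sum_i c i * Dc (F i) r w.
  move=> r w; symmetry.
  apply: (@D_unique g' (fun r w => \sum_i c i * Dc (F i) r w) (Dc g')).
  - move=> r'; apply: fsum_rlin => i; case: (HcF i) => Hc HF; split.
      by move=> a b; rewrite (blin_add _ _ (Dc_blin r' HF)) mulrDr.
    by move=> u v Hu; rewrite (blin_r _ (Dc_blin r' HF) Hu) mulrA.
  - by move=> r'; exact: (proj1 (Dc_blin r' Hg)).
  - move=> u v; rewrite Hw.
    transitivity (\sum_i \sum_(r' < p2) c i * Dc (F i) r' u * eta r' v).
      by apply: eq_bigr => i _; case: (HcF i) => _ HF; rewrite (Dc_eq _ _ HF) mulr_sumr; apply: eq_bigr => r' _; rewrite mulrA.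
    by rewrite exchange_big; apply: eq_bigr => r' _; rewrite mulr_suml.
  - by move=> u v; apply: Dc_eq.
rewrite /Xi; under eq_bigr => r _ do rewrite HD.
rewrite exchange_big; apply: eq_bigr => i _; by rewrite mulr_sumr.
Qed.

Lemma cancel_lemma (X : 'I_p -> M -> M) : (forall i, blin (X i)) ->
  (forall c, blin c -> forall z, \sum_(i < p) X i (phi c i z) = 0) -> forall j q0, X j q0 = 0.
Proof.
move=> HX H j q0.
pose w l := Dc (g j) l q0.
have Hu : forall i, \sum_(l < p2) phi (eta l) i (w l) = if i == j then q0 else 0.
  apply: Hg_uniq; apply: functional_extensionality => z.
  transitivity (g j (q0 * z)); last first.
    rewrite (bigD1 j) //= eqxx big1 ?addr0 // => i /negbTE ->.
    by rewrite mul0r (blin0 (g_blin i)).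
  rewrite (Dc_eq _ _ (g_blin j)).
  transitivity (\sum_(i < p) \sum_(l < p2) g i (phi (eta l) i (w l) * z)).
    by apply: eq_bigr => i _; rewrite mulr_suml (blin_sum _ _ _ (g_blin i)).
  rewrite exchange_big; apply: eq_bigr => l _; rewrite -phi_spec //; exact: eta_blin.
transitivity (\sum_(i < p) X i (if i == j then q0 else 0)).
  rewrite (bigD1 j) //= eqxx big1 ?addr0 // => i /negbTE ->.
  exact: blin0 (HX i).
under eq_bigr => i _ do rewrite -Hu (blin_sum _ _ _ (HX i)).
rewrite exchange_big big1 // => l _; apply: H; exact: eta_blin.
Qed.

Lemma Xi_eps g' z : blin g' -> Xi g' z = g' 1 * z.
Proof.
have Htg := fun i => tl_blin (g_blin i).
have step1 : forall i z, Xi (tl (g i)) z = tl (g i) 1 * z.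
  move=> i0 z0; apply/eqP; rewrite -subr_eq0; apply/eqP.
  apply: (@cancel_lemma (fun i z => Xi (tl (g i)) z - tl (g i) 1 * z)).
    move=> i; have Hc := central_f1 (Htg i); have HXi := Xi_blin (Htg i); split; first split.
    - by move=> a b; rewrite (blin_add _ _ HXi) mulrDr opprD addrACA.
    - by move=> u w Hu; rewrite mulrBl (blin_r _ HXi Hu) mulrA.
    - by move=> u w Hu; rewrite mulrBr (blin_l _ HXi Hu) mulrA (centralC u Hc) mulrA.
  move=> c Hc z'.
  have Htc := tl_blin Hc.
  have Hdat : forall u v, tl c (u * v) = \sum_(i < p) tl (g i) u * phi c i v by move=> u v; exact: tl_phi.
  have HXY : forall i, blin (tl (g i)) /\ blin (phi c i) by move=> i; split; [exact: Htg | exact: phi_blin].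
  rewrite sumrB; apply/eqP; rewrite subr_eq0; apply/eqP.
  rewrite -Hdat mul1r.
  transitivity (\sum_(r < p2) Xi (Dc (tl c) r) (eta r z')); last exact: (fid z' Htc).
  transitivity (\sum_(i < p) \sum_(r < p2) R (phi c i) (kap r) * Xi (tl (g i)) (eta r z')).
    apply: eq_bigr => i _; rewrite (ldb z' (phi_blin i Hc)) (blin_sum _ _ _ (Xi_blin (Htg i))).
    by apply: eq_bigr => r _; rewrite (blinC_l _ (Xi_blin (Htg i)) (R_kap_central r (phi_blin i Hc))).
  rewrite exchange_big; apply: eq_bigr => r _; symmetry.
  apply: (Xi_lin _ (Dc_blin r Htc)).
    by move=> i; split; [exact: R_kap_central (phi_blin i Hc) | exact: Htg].
  by move=> w; rewrite -(BMcanon Htc HXY Hdat).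
move=> Hg.
have Hc : forall i, central (T (psi i \o hat g')).
  by move=> i; apply: T_central; apply: blin_comp; [exact: psi_blin | exact: hat_blin].
have Hw : forall w, g' w = \sum_(i < p) T (psi i \o hat g') * tl (g i) w.
  move=> w; rewrite -tl_lin // -(tl_hat w Hg); apply: tl_ext => v.
  by apply: rdb; exact: hat_blin.
rewrite (Xi_lin _ Hg _ Hw); last by move=> i; split; [exact: Hc | exact: Htg].
rewrite Hw mulr_suml; apply: eq_bigr => i _; by rewrite step1 mulrA.
Qed.

Lemma antiA_T a s : blin a -> antipodeA N E x y lam a s -> forall W, blin W -> T (s \o W) = T (a \o hat W).
Proof.
move=> Ha [Hs Hp] W HW.
have Hs' := inA_blin Hs.
have Hh := hat_blin HW; have Hhh := hat_blin Hh.
have := Hp (bb (tl (hat (hat W)))) (bb (hat (hat W))) (bb_inB (tl_blin Hhh)) (antiB_mk Hhh).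
rewrite !pair_formula; [|exact: proj1 Ha|exact: inB_Bl (bb_inB Hhh)|exact: proj1 Hs'|exact: inB_Bl (bb_inB (tl_blin Hhh))].
rewrite !bbE //; last exact: tl_blin.
have E1 : forall v, tl (hat (hat W)) v = hat W v by move=> v; rewrite tl_hat.
have -> : T (a \o tl (hat (hat W))) = T (a \o hat W) by apply: T_ext => v; rewrite /= E1.
move=> <-; apply: T_ext => v /=; rewrite (tl_ext v E1) tl_hat //.
Qed.

Lemma SP_1 g' : blin g' -> SP g' 1 = g' 1.
Proof.
move=> Hg; rewrite -T_E; last exact: (proj1 (SP_blin Hg)).
rewrite SP_T //.
rewrite (@T_ext (g' \o hat E) (g' \o E)); last by move=> v; rewrite /= hat_E.
by rewrite T_E //; exact: proj1 Hg.
Qed.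

Lemma main_fwd m : fixedA N E x y lam m -> m \in N.
Proof.
move=> Hfix.
have HkA : forall i, inAs (kap i) by move=> i; apply: blin_inA; exact: kap_blin.
have HeA : forall i, inAs (eta i) by move=> i; apply: blin_inA; exact: eta_blin.
have Hco : coprodA N E x y lam E kap eta.
  split; first by move=> i; split.
  move=> b b' Hb Hb'; apply: L1 => //.
    by move=> i; split; [exact: kap_blin | exact: eta_blin].
  by move=> u v; apply: Dc_eq; exact: Eblin.
have Hanti : forall i, antipodeA N E x y lam (eta i) (SP (eta i)).
  move=> i; have He := eta_blin i; split; first by apply: blin_inA; exact: SP_blin.
  move=> b t Hb Ht.
  have HbE := inB_blin Hb.
  rewrite !pair_formula; [|exact: proj1 He|exact: inB_Bl (proj1 Ht)|exact: proj1 (SP_blin He)|exact: inB_Bl].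
  rewrite SP_T //; last exact: tl_blin.
  apply: T_ext => v /=; rewrite hat_tl //; congr (eta i _).
  exact: antiB_eq.
have := Hfix E (blin_inA Eblin) p2 kap eta Hco (fun i => SP (eta i)) Hanti.
move=> /(congr1 (fun F => F 1)) /=.
rewrite /lmul mulr1 epsA_eq ?HE1 ?mul1r; last exact: Erlin.
have -> : \sum_(i < p2) kap i (m * SP (eta i) 1) = E m.
  rewrite -[in RHS](mulr1 m) (Dc_eq _ _ Eblin); apply: eq_bigr => i _.
  rewrite SP_1; last exact: eta_blin.
  by rewrite (blinC_r _ (kap_blin i) (central_f1 (eta_blin i))).
by move=> <-.
Qed.

Lemma main_bwd m : m \in N -> fixedA N E x y lam m.
Proof.
move=> Hm a HaA q a1 a2 Hco s Hs.
have Ha := inA_blin HaA.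
have H12 : forall i, blin (a1 i) /\ blin (a2 i).
  by move=> i; case: (proj1 Hco i) => /inA_blin ? /inA_blin ?.
have Hcl := coprod_classical Ha Hco.
have HsSP : forall i w, s i w = SP (a2 i) w.
  move=> i w; have Hsi := inA_blin (proj1 (Hs i)); have H2 := proj2 (H12 i).
  have HSP := SP_blin H2.
  apply/eqP; rewrite -subr_eq0; apply/eqP; move: w; apply: T_nondeg.
    split; first split.
    - by move=> u v; rewrite (blin_add _ _ Hsi) (blin_add _ _ HSP) opprD addrACA.
    - by move=> u v Hu; rewrite mulrBl (blin_r _ Hsi Hu) (blin_r _ HSP Hu).
    - by move=> u v Hu; rewrite mulrBr (blin_l _ Hsi Hu) (blin_l _ HSP Hu).
  move=> kk Hk.
  rewrite (@T_ext _ (fun z => (s i \o kk) z + - (SP (a2 i) \o kk) z)) // T_add T_opp.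
  by rewrite (antiA_T H2 (Hs i) Hk) SP_T // subrr.
apply: functional_extensionality => z; rewrite /lmul epsA_eq; last exact: proj1 Ha.
transitivity (\sum_(i < q) a1 i (SP (a2 i) (m * z))).
  by apply: eq_bigr => i _; rewrite -HsSP (blin_l _ (inA_blin (proj1 (Hs i))) Hm).
by rewrite (Xi_data _ Ha H12 Hcl) Xi_eps // mulrA.
Qed.

End Main.

Unset Implicit Arguments.

Theorem lemma6p4 (k : fieldType) (M : algType k) (N : {pred M})
  (E : M -> M) (n : nat) (x y : 'I_n -> M) (lam : k)
  (HN : subalg_closed N)
  (HEN : forall m, E m \in N)
  (HEadd : forall m m', E (m + m') = E m + E m')
  (HEl : forall u m, u \in N -> E (u * m) = u * E m)
  (HEr : forall u m, u \in N -> E (m * u) = E m * u)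
  (Hqb1 : forall m, \sum_(i < n) E (m * x i) * y i = m)
  (Hqb2 : forall m, \sum_(i < n) x i * E (y i * m) = m)
  (HE1 : E 1 = 1)
  (Hlam : lam != 0)
  (Hxy : \sum_(i < n) x i * y i = lam^-1%:A)
  (Hirr : forall m : M, (forall u, u \in N -> m * u = u * m) ->
            exists c : k, m = c%:A)
  (Hd2 : depth2 N E x y lam) :
  forall m : M, fixedA N E x y lam m <-> m \in N.
Proof.
move=> m.
case: Hd2 => [[p [g [HgA [Hgs Hgu]]]] [p2 [h [HhB [Hhs Hhu]]]]].
split.
- by eapply main_fwd; eassumption.
- by eapply main_bwd; eassumption.
Qed.
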